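(* For every $\epsilon\ge1$ and all sufficiently large $n$, there exists a binary $k$-PIR code $[N,n,k]^P$ with $k=\Theta(n^\epsilon)$ and $N=\mathcal{O}(n^{\epsilon^+})$, i.e., $N=\mathcal{O}(n^{\epsilon+\tau})$ for every $\tau>0$.
   Context: A binary $[N,n,k]^P$ code ($k$-PIR code) is a binary linear code of length $N$ encoding $n$ information bits such that for every information bit $x_i$ there exist $k$ mutually disjoint sets $R_{i,1},\dots,R_{i,k}\subseteq\{1,\dots,N\}$ such that, for each $j$, $x_i$ is a function of the codeword bits indexed by $R_{i,j}$. *)

(* Defs.v *)
From mathcomp Require Import all_boot all_algebra.
From Stdlib Require Import Reals.

Set Implicit Arguments.
Unset Strict Implicit.
Unset Printing Implicit Defensive.

Import GRing.Theory.
Local Open Scope ring_scope.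

(* A binary linear code of length N encoding n information bits, given by a
   generator matrix G : the information word x : 'rV_n is encoded as x *m G. *)

Definition recoverable_from (n N : nat) (G : 'M['F_2]_(n, N))
  (i : 'I_n) (R : {set 'I_N}) : Prop :=
  exists f : {ffun 'I_N -> 'F_2} -> 'F_2,
    forall x : 'rV['F_2]_n,
      x ord0 i = f [ffun t => if t \in R then (x *m G) ord0 t else 0].

Definition is_PIR_code (N n k : nat) (G : 'M['F_2]_(n, N)) : Prop :=
  forall i : 'I_n, exists R : 'I_k -> {set 'I_N},
    (forall j1 j2 : 'I_k, j1 != j2 -> [disjoint R j1 & R j2]) /\
    (forall j : 'I_k, @recoverable_from n N G i (R j)).

Definition PIR_exists (N n k : nat) : Prop :=
  exists G : 'M['F_2]_(n, N), @is_PIR_code N n k G.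

(* Main.v *)
Require Import Defs.
From mathcomp Require Import all_boot all_algebra all_field.
From Stdlib Require Import FunctionalExtensionality.
Set Implicit Arguments. Unset Strict Implicit. Unset Printing Implicit Defensive.
Import GRing.Theory.
Local Open Scope ring_scope.

Definition PIRgen (I C K : finType) (Gf : I -> C -> 'F_2) : Prop :=
  forall i : I, exists R : K -> {set C},
    (forall j1 j2, j1 != j2 -> [disjoint R j1 & R j2]) /\
    (forall j, exists f : (C -> 'F_2) -> 'F_2, forall x : I -> 'F_2,
        x i = f (fun c => if c \in R j then \sum_i' x i' * Gf i' c else 0)).

Lemma PIRgen_exists (I C K : finType) (Gf : I -> C -> 'F_2) (n k : nat) :
  @PIRgen I C K Gf -> (n <= #|I|)%N -> (k <= #|K|)%N -> PIR_exists #|C| n k.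
Proof.
move=> HG hn hk.
pose emb (i : 'I_n) : I := enum_val (widen_ord hn i).
have emb_inj : injective emb.
  move=> i1 i2 /enum_val_inj /(congr1 val) /= H; exact: val_inj.
pose G : 'M['F_2]_(n, #|C|) := \matrix_(i, c) Gf (emb i) (enum_val c).
exists G => i.
have [R [Rdis Rrec]] := HG (emb i).
exists (fun j => [set c : 'I_#|C| | enum_val c \in R (enum_val (widen_ord hk j))]).
split.
  move=> j1 j2 hj; rewrite -setI_eq0; apply/eqP/setP => c.
  rewrite !inE.
  have hne : enum_val (widen_ord hk j1) != enum_val (widen_ord hk j2).
    rewrite (inj_eq enum_val_inj); apply: contra hj => /eqP [] /eqP.
    by rewrite -(inj_eq val_inj).
  have D := Rdis _ _ hne; rewrite -setI_eq0 in D.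
  by move/eqP/setP: D => /(_ (enum_val c)); rewrite !inE.
move=> j; have [f Hf] := Rrec (enum_val (widen_ord hk j)).
exists (fun w : {ffun 'I_#|C| -> 'F_2} => f (fun c => w (enum_rank c))).
move=> x.
pose X (mu : I) : 'F_2 := \sum_(i' < n) x ord0 i' * (emb i' == mu)%:R.
have XE : forall i', X (emb i') = x ord0 i'.
  move=> i'; rewrite /X (bigD1 i') //= eqxx mulr1 big1 ?addr0 // => i2 hi2.
  by rewrite (inj_eq emb_inj) (negbTE hi2) mulr0.
rewrite -XE Hf; congr f; apply: functional_extensionality => c; rewrite ffunE inE enum_rankK.
case: ifP => // _.
rewrite mxE; under [RHS]eq_bigr do rewrite mxE.
rewrite /X enum_rankK (eq_bigr (fun mu => \sum_(i1 < n) x ord0 i1 * (emb i1 == mu)%:R * Gf mu c)); last by move=> mu _; rewrite mulr_suml.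
rewrite exchange_big /=; apply: eq_bigr => i' _.
rewrite (bigD1 (emb i')) //= eqxx mulr1 big1 ?addr0 // => mu hmu.
by rewrite eq_sym (negbTE hmu) mulr0 mul0r.
Qed.
Section PowSum.
Variable F : finFieldType.
Variable h : nat.
Hypothesis F2 : 2 \in [pchar F].
Hypothesis cardF : #|F| = (2 ^ h.+1)%N.

Lemma sum_pow0 (j : nat) : (j < #|F|.-1)%N -> \sum_(t : F) t ^+ j = 0.
Proof.
move=> hj; case: j hj => [|j] hj.
  under eq_bigr do rewrite expr0.
  by rewrite sumr_const cardF -mulr_natr mul1r natrX (pcharf0 F2) expr0n.
have : [exists a : F, (a != 0) && (a ^+ j.+1 != 1)].
  case: (boolP [exists a : F, (a != 0) && (a ^+ j.+1 != 1)]) => // /existsPn H; exfalso.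
  have := @max_poly_roots F ('X^(j.+1) - 1%:P) (enum (predC1 (0:F))).
  rewrite size_XnsubC // -cardE cardC1 ltnS leqNgt hj.
  have p0 : 'X^(j.+1) - 1%:P != 0 :> {poly F}.
    by rewrite -size_poly_eq0 size_XnsubC.
  rewrite p0 enum_uniq /= => H2.
  suff : false by [].
  apply: H2 => //.
  apply/allP => x; rewrite mem_enum /= => x0.
  have := H x; rewrite inE in x0; rewrite x0 /= negbK => /eqP xj.
  by rewrite /root !hornerE xj subrr.
case/existsP => a /andP [a0 aj].
have : \sum_(t : F) t ^+ j.+1 = a ^+ j.+1 * \sum_(t : F) t ^+ j.+1.
  rewrite mulr_sumr (reindex_inj (mulfI a0)) /=.
  by apply: eq_bigr => t _; rewrite exprMn.
move/eqP; rewrite -subr_eq0 -{1}(mul1r (\sum_t _)) -mulrBl mulf_eq0 subr_eq0 eq_sym.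
by rewrite (negbTE aj) /= => /eqP.
Qed.

Lemma sum_poly0 (p : {poly F}) : (size p < #|F|)%N -> \sum_(t : F) p.[t] = 0.
Proof.
move=> hp.
under eq_bigr do rewrite horner_coef.
rewrite exchange_big /= big1 // => i _.
rewrite -mulr_sumr sum_pow0 ?mulr0 //.
rewrite -ltnS prednK; first exact: leq_ltn_trans (ltn_ord i) hp.
by rewrite cardF expn_gt0.
Qed.
End PowSum.

Lemma size_prod_bound (R : nzRingType) (I : Type) (s : seq I) (P : pred I)
   (F : I -> {poly R}) (d : I -> nat) :
  (forall i, P i -> size (F i) <= (d i).+1)%N ->
  (size (\prod_(i <- s | P i) F i)%R <= (\sum_(i <- s | P i) d i)%N.+1)%N.
Proof.
move=> H; elim: s => [|x s IH]; first by rewrite !big_nil size_poly1.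
rewrite !big_cons; case: (boolP (P x)) => // Px.
apply: leq_trans (size_polyMleq _ _) _.
have := H x Px; case: (size (F x)) => [|k] Hk /=.
  rewrite add0n; apply: leq_trans (leq_pred _) _; apply: leq_trans IH _.
  by rewrite ltnS leq_addl.
by rewrite -addnS; apply: leq_add.
Qed.
Section Code.
Variable F : finFieldType.
Variables (m' e : nat).
Local Notation m := m'.+1.
Hypothesis he : (e < #|F|)%N.
Variable h : nat.
Hypothesis F2 : 2 \in [pchar F].
Hypothesis cardF : #|F| = (2 ^ h.+1)%N.
Hypothesis hme : (m * e + 2 <= #|F|)%N.

Definition alpha (i : 'I_e.+1) : F := nth 0 (enum F) i.

Lemma alpha_inj : injective alpha.
Proof.
move=> i1 i2; rewrite /alpha => /eqP; rewrite nth_uniq ?enum_uniq -?cardE //.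
- by move/eqP/val_inj.
- exact: leq_trans (ltn_ord i1) he.
- exact: leq_trans (ltn_ord i2) he.
Qed.

Definition ell (i : 'I_e.+1) (y : F) : F :=
  \prod_(i' < e.+1 | i' != i) ((y - alpha i') / (alpha i - alpha i')).

Lemma ell_alpha i i' : ell i (alpha i') = (i == i')%:R.
Proof.
rewrite /ell; case: eqP => [<-|/eqP hne].
  rewrite big1 // => i2 hi2; rewrite divff // subr_eq0.
  by apply: contra hi2 => /eqP/alpha_inj ->.
by rewrite (bigD1 i') 1?eq_sym //= subrr mul0r mul0r.
Qed.

Definition Lag (a : {ffun 'I_m -> 'I_e.+1}) (z : {ffun 'I_m -> F}) : F :=
  \prod_(j < m) ell (a j) (z j).

Definition pt (a : {ffun 'I_m -> 'I_e.+1}) : {ffun 'I_m -> F} :=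
  [ffun j => alpha (a j)].

Lemma Lag_pt a a' : Lag a (pt a') = (a == a')%:R.
Proof.
rewrite /Lag; case: eqP => [<-|/eqP hne].
  by rewrite big1 // => j _; rewrite ffunE ell_alpha eqxx.
have [j hj] : exists j, a j != a' j.
  apply/existsP; apply: contraR hne => /existsPn H; apply/eqP/ffunP => j.
  by have := H j; rewrite negbK => /eqP.
by rewrite (bigD1 j) //= ffunE ell_alpha (negbTE hj) mul0r.
Qed.

Definition dir (w : {ffun 'I_m' -> F}) : {ffun 'I_m -> F} :=
  [ffun j => if unlift ord0 j is Some j' then w j' else 1].

Definition line (a : {ffun 'I_m -> 'I_e.+1}) (w : {ffun 'I_m' -> F}) (t : F) : {ffun 'I_m -> F} :=
  [ffun j => alpha (a j) + t * dir w j].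

Definition ellpoly (i : 'I_e.+1) (c d : F) : {poly F} :=
  \prod_(i' < e.+1 | i' != i)
     ((c / (alpha i - alpha i'))%:P * 'X + ((d - alpha i') / (alpha i - alpha i'))%:P).

Lemma ellpolyE i c d t : (ellpoly i c d).[t] = ell i (d + t * c).
Proof.
rewrite /ellpoly horner_prod /ell; apply: eq_bigr => i' _.
rewrite !hornerE /= -mulrA [_^-1 * _]mulrC mulrA -mulrDl; congr (_ * _).
by rewrite [c * t]mulrC addrA [t * c + d]addrC.
Qed.

Lemma size_ellpoly i c d : (size (ellpoly i c d) <= e.+1)%N.
Proof.
apply: leq_trans (@size_prod_bound _ _ _ _ _ (fun _ => 1%N) _) _.
  move=> i' _; rewrite size_MXaddC; case: ifP => // _.
  by rewrite ltnS size_polyC leq_b1.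
by rewrite sum1_card cardC1 card_ord.
Qed.

Definition Lpoly (a' a : {ffun 'I_m -> 'I_e.+1}) (w : {ffun 'I_m' -> F}) : {poly F} :=
  \prod_(j < m) ellpoly (a' j) (dir w j) (alpha (a j)).

Lemma LpolyE a' a w t : (Lpoly a' a w).[t] = Lag a' (line a w t).
Proof.
rewrite /Lpoly horner_prod /Lag; apply: eq_bigr => j _.
by rewrite ellpolyE /line [in RHS]ffunE.
Qed.

Lemma size_Lpoly a' a w : (size (Lpoly a' a w) <= (m * e).+1)%N.
Proof.
apply: leq_trans (@size_prod_bound _ _ _ _ _ (fun _ => e) _) _.
  by move=> j _; apply: size_ellpoly.
by rewrite sum_nat_const card_ord.
Qed.



Lemma sum_line a' a w : \sum_(t : F) Lag a' (line a w t) = 0.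
Proof.
rewrite (eq_bigr (fun t => (Lpoly a' a w).[t])); last by move=> t _; rewrite LpolyE.
apply: (sum_poly0 F2 cardF); apply: leq_ltn_trans (size_Lpoly _ _ _) _.
by rewrite -addn2.
Qed.

Lemma line0 a w : line a w 0 = pt a.
Proof. by apply/ffunP => j; rewrite !ffunE mul0r addr0. Qed.

Variable phi : F -> 'F_2.
Hypothesis phiD : forall u v, phi (u + v) = phi u + phi v.
Hypothesis phi1 : phi 1 = 1.

Lemma phi0 : phi 0 = 0.
Proof. by have := phiD 0 0; rewrite addr0 => /eqP; rewrite -subr_eq subrr eq_sym => /eqP. Qed.

Lemma phiN u : phi (- u) = - phi u.
Proof. by apply/eqP; rewrite -subr_eq0 opprK -phiD addNr phi0. Qed.

Lemma phi_sum (I : Type) (s : seq I) (P : pred I) (G : I -> F) :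
  phi (\sum_(i <- s | P i) G i) = \sum_(i <- s | P i) phi (G i).
Proof. exact: (big_morph phi phiD phi0). Qed.

Lemma F2cases (b : 'F_2) : b = 0 \/ b = 1.
Proof. case: b => [[|[|k]]] hb; [left|right|by []]; exact/val_inj. Qed.

Definition iota (b : 'F_2) : F := if b == 0 then 0 else 1.

Lemma phi_iota b : phi (iota b) = b.
Proof. by case: (F2cases b) => ->; rewrite /iota ?eqxx ?phi0 // oner_eq0 phi1. Qed.

Lemma mul_phi b y : b * phi y = phi (iota b * y).
Proof. by case: (F2cases b) => ->; rewrite /iota ?eqxx ?mul0r ?phi0 // oner_eq0 !mul1r. Qed.

Variable r : nat.
Local Notation GI := {ffun 'I_m -> 'I_e.+1}.
Local Notation CI := ('I_r * {ffun 'I_m -> F})%type.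
Local Notation KI := ('I_r * {ffun 'I_m' -> F})%type.

Definition cw (x : GI -> 'F_2) (z : {ffun 'I_m -> F}) : F :=
  \sum_(a : GI) iota (x a) * Lag a z.

Definition Gf (a : GI) (c : CI) : 'F_2 := phi (Lag a c.2).

Lemma GfE (x : GI -> 'F_2) c : \sum_a x a * Gf a c = phi (cw x c.2).
Proof. by rewrite /cw phi_sum; apply: eq_bigr => a _; rewrite mul_phi. Qed.

Lemma cw_pt x a : cw x (pt a) = iota (x a).
Proof.
rewrite /cw (bigD1 a) //= Lag_pt eqxx mulr1 big1 ?addr0 // => a' ha'.
by rewrite Lag_pt (negbTE ha') mulr0.
Qed.

Lemma cw_line x a w : iota (x a) = - \sum_(t : F | t != 0) cw x (line a w t).
Proof.
have : \sum_(t : F) cw x (line a w t) = 0.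
  rewrite /cw exchange_big /= big1 // => a' _.
  by rewrite -mulr_sumr sum_line mulr0.
by rewrite (bigD1 0) //= line0 cw_pt => /eqP; rewrite addr_eq0 => /eqP.
Qed.

Definition Rset (a : GI) (k : KI) : {set CI} :=
  [set (k.1, line a k.2 t) | t in [pred t : F | t != 0]].

Lemma Rset_disj a k1 k2 : k1 != k2 -> [disjoint Rset a k1 & Rset a k2].
Proof.
move=> hk; rewrite -setI_eq0; apply/eqP/setP => c; rewrite !inE.
apply/negP => /andP [/imsetP [t1 ht1 ->] /imsetP [t2 ht2 [e1 e2]]].
move: hk; rewrite -pair_eqE /= e1 eqxx /= => /negP; apply.
have e0 := congr1 (fun f : {ffun 'I_m -> F} => f ord0) e2; rewrite /= /line /dir !ffunE in e0.
rewrite unlift_none !mulr1 in e0; move/addrI: e0 => e0; subst t2.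
apply/eqP/ffunP => j; have := congr1 (fun f : {ffun 'I_m -> F} => f (lift ord0 j)) e2.
rewrite /= /line /dir !ffunE liftK => /addrI /mulfI; apply.
by rewrite inE in ht1.
Qed.

Lemma code_PIR : @PIRgen GI CI KI Gf.
Proof.
move=> a; exists (Rset a); split; first exact: Rset_disj.
move=> k; exists (fun g => - \sum_(t : F | t != 0) g (k.1, line a k.2 t)).
move=> x; rewrite -[x a]phi_iota (cw_line x a k.2) phiN phi_sum; congr (- _).
apply: eq_bigr => t ht; rewrite GfE /=.
suff -> : (k.1, line a k.2 t) \in Rset a k by [].
by apply/imsetP; exists t.
Qed.
End Code.


Lemma code_exists (m' e r h n k : nat) :
  (e < 2 ^ h.+1)%N -> (m'.+1 * e + 2 <= 2 ^ h.+1)%N ->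
  (n <= e.+1 ^ m'.+1)%N -> (k <= r * (2 ^ h.+1) ^ m')%N ->
  PIR_exists (r * (2 ^ h.+1) ^ m'.+1) n k.
Proof.
move=> he hme hn hk.
have [Fm pc cardFm] := @pPrimePowerField 2 h.+1 (erefl _) (ltn0Sn _).
have [f flin fbij] := pprimeChar_vectAxiom pc.
pose F' := pPrimeCharType pc.
have fD : forall u v : Fm, f (u + v) = f u + f v.
  move=> u v; have := flin 1 (u : F') v.
  rewrite /= (_ : 1 *: (u : F') = u) ?scale1r //.
have [j hj] : exists j, f 1 ord0 j != 0.
  apply/existsP; apply: contraT => /existsPn H.
  have f1 : f (1 : F') = 0.
    by apply/rowP => j; rewrite mxE; have := H j; rewrite negbK => /eqP.
  have f0 : f (0 : F') = 0 by apply: (addrI (f 0)); rewrite -fD !addr0.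
  have := bij_inj fbij (etrans f1 (esym f0)); by move/eqP; rewrite oner_eq0.
pose phi (y : Fm) : 'F_2 := f y ord0 j.
have phiD : forall u v, phi (u + v) = phi u + phi v.
  by move=> u v; rewrite /phi fD mxE.
have phi1 : phi 1 = 1.
  by rewrite /phi; case: (F2cases (f 1 ord0 j)) hj => ->; rewrite ?eqxx.
have he' : (e < #|Fm|)%N by rewrite cardFm.
have hme' : (m'.+1 * e + 2 <= #|Fm|)%N by rewrite cardFm.
have HP2 := @code_PIR Fm m' e he' h pc cardFm hme' phi phiD phi1 r.
have hn' : (n <= #|{ffun 'I_m'.+1 -> 'I_e.+1}|)%N by rewrite card_ffun !card_ord.
have hk' : (k <= #|{: 'I_r * {ffun 'I_m' -> Fm}}|)%N.
  by rewrite card_prod card_ffun !card_ord cardFm.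
have := PIRgen_exists HP2 hn' hk'.
by rewrite card_prod card_ffun !card_ord cardFm.
Qed.

From Stdlib Require Import Reals Lra ZArith.
Require Import Defs.
From mathcomp Require Import all_boot zify.
Delimit Scope R_scope with R.
Set Implicit Arguments. Unset Strict Implicit. Unset Printing Implicit Defensive.
Local Open Scope R_scope.

Lemma natRM m n : INR (m * n)%N = (INR m * INR n).
Proof. exact: mult_INR. Qed.
Lemma natRD m n : INR (m + n)%N = (INR m + INR n).
Proof. exact: plus_INR. Qed.
Lemma natRX m n : INR (m ^ n)%N = (INR m ^ n).
Proof. elim: n => [|n IH]; first by rewrite expn0. by rewrite expnS natRM IH. Qed.
Lemma natRle m n : (m <= n)%N -> (INR m <= INR n).
Proof. by move/leP; apply: le_INR. Qed.


Lemma Rpower_ge1 x e : 1 <= x -> 0 <= e -> 1 <= Rpower x e.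
Proof.
move=> hx he; rewrite -(Rpower_O x); last lra.
exact: Rle_Rpower.
Qed.

Lemma Rpower_invK x m : 0 < x -> (0 < m)%N -> Rpower x (/ INR m) ^ m = x.
Proof.
move=> hx hm; rewrite -Rpower_pow; last exact: exp_pos.
rewrite Rpower_mult Rinv_l ?Rpower_1 //.
by apply: not_0_INR; case: m hm.
Qed.

Lemma Rpower_powK x m : 0 < x -> (0 < m)%N -> Rpower (x ^ m) (/ INR m) = x.
Proof.
move=> hx hm; rewrite -Rpower_pow // Rpower_mult Rinv_r ?Rpower_1 //.
by apply: not_0_INR; case: m hm.
Qed.


Definition sP (n m' : nat) : pred nat := fun s => (n <= s ^ m'.+1)%N.
Lemma sP_ex n m' : exists s, sP n m' s.
Proof.
exists n; rewrite /sP; case: n => // n.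
by rewrite -{1}(expn1 n.+1) leq_pexp2l.
Qed.
Definition sf n m' := ex_minn (sP_ex n m').

Lemma sf_spec n m' : (n <= sf n m' ^ m'.+1)%N /\
  (forall s', (n <= s' ^ m'.+1)%N -> (sf n m' <= s')%N).
Proof. rewrite /sf; case: ex_minnP => s hs hmin; split => //. Qed.

Lemma sf_pos n m' : (1 <= n)%N -> (1 <= sf n m')%N.
Proof.
move=> hn; have [h1 _] := sf_spec n m'; move: h1.
case: (sf n m') => // h0; have := leq_trans hn h0; by rewrite exp0n.
Qed.

Lemma sf_real n m' : (1 <= n)%N ->
  INR (sf n m') <= 2 * Rpower (INR n) (/ INR m'.+1).
Proof.
move=> hn; have [_ hmin] := sf_spec n m'; have hs := sf_pos m' hn.
have hn' : 1 <= INR n by apply: (natRle hn).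
set s := sf n m' in hmin hs *.
have hlt : ((s.-1) ^ m'.+1 < n)%N.
  rewrite ltnNge; apply/negP => /hmin H.
  have hps : (s.-1 < s)%N by rewrite ltn_predL.
  by have := leq_ltn_trans H hps; rewrite ltnn.
have hr : 1 <= Rpower (INR n) (/ INR m'.+1).
  apply: Rpower_ge1 => //; apply: Rlt_le; apply: Rinv_0_lt_compat.
  by apply: lt_0_INR; apply/ltP.
have hlt' : INR s.-1 < Rpower (INR n) (/ INR m'.+1).
  apply: Rnot_le_lt => hle.
  have := pow_incr (Rpower (INR n) (/ INR m'.+1)) (INR s.-1) m'.+1.
  rewrite Rpower_invK //; last lra.
  move=> H; have := natRle (ltnW hlt); have : (s.-1 ^ m'.+1 < n)%N by [].
  move=> h2 h3.
  have h4 : INR n <= INR (s.-1 ^ m'.+1).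
    rewrite natRX; apply: H; split=> //; lra.
  have h5 : (n <= s.-1 ^ m'.+1)%N by apply/leP; apply: INR_le.
  by move: h2; rewrite ltnNge h5.
have : INR s = INR s.-1 + 1.
  by rewrite -{1}(prednK hs) S_INR.
lra.
Qed.

Definition hf n m' := up_log 2 (m'.+1 * sf n m' + 2).
Definition qf n m' := (2 ^ hf n m')%N.

Lemma hf_pos n m' : (0 < hf n m')%N.
Proof. by rewrite /hf up_log_gt0 /= addn2. Qed.

Lemma qf_ge n m' : (m'.+1 * sf n m' + 2 <= qf n m')%N.
Proof. exact: up_logP. Qed.

Lemma qf_le n m' : (1 <= n)%N -> (qf n m' <= 4 * (m'.+1 * sf n m'))%N.
Proof.
move=> hn; have hs := sf_pos m' hn.
have := @up_log_gtn 2 (m'.+1 * sf n m' + 2) isT.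
rewrite addn2 => /(_ isT); rewrite -/(hf n m') /qf.
rewrite -(prednK (hf_pos n m')) expnS.
set x := (m'.+1 * sf n m')%N; set y := (2 ^ (hf n m').-1)%N.
have : (1 <= x)%N by rewrite /x muln_gt0.
move=> hx hy; rewrite ltnS in hy.
have hy' : (y <= x.+1)%N by move: hy; rewrite /y /hf -/x addn2.
lia.
Qed.

Section Asym.
Variable eps : R.
Hypothesis heps : 1 <= eps.

Definition Kf (n : nat) : nat := Z.to_nat (up (Rpower (INR n) eps)).

Lemma Kf_bounds n : (1 <= n)%N ->
  Rpower (INR n) eps <= INR (Kf n) <= 2 * Rpower (INR n) eps.
Proof.
move=> hn; have hn' : 1 <= INR n by apply: (natRle hn).
have h1 := Rpower_ge1 hn' (ltac:(lra) : 0 <= eps).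
have [a1 a2] := archimed (Rpower (INR n) eps).
have hz : (0 <= up (Rpower (INR n) eps))%Z.
  apply: le_IZR; lra.
rewrite /Kf [INR (Z.to_nat _)]INR_IZR_INZ Z2Nat.id //; lra.
Qed.


Definition rf n m' := (Kf n %/ qf n m' ^ m' + 1)%N.
Definition Nf n m' := (rf n m' * qf n m' ^ m'.+1)%N.

Lemma Nf_PIR n m' : (1 <= n)%N -> PIR_exists (Nf n m') n (Kf n).
Proof.
move=> hn; have hs := sf_pos m' hn; have hq := qf_ge n m'.
have [hsn _] := sf_spec n m'.
have hqe : qf n m' = (2 ^ (hf n m').-1.+1)%N by rewrite prednK ?hf_pos.
have hd : (0 < qf n m' ^ m')%N by rewrite expn_gt0 /qf expn_gt0.
rewrite /Nf /rf hqe in hd *; rewrite hqe in hq.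
set q := (2 ^ (hf n m').-1.+1)%N in hq hd *.
set s := sf n m' in hs hq hsn *.
have hsm : (s <= m'.+1 * s)%N by apply: leq_pmull.
have hsm2 : (m'.+1 * s.-1 <= m'.+1 * s)%N by rewrite leq_mul2l leq_pred orbT.
apply: (@code_exists m' s.-1).
- rewrite -/q; lia.
- rewrite -/q; lia.
- by rewrite prednK.
- rewrite -/q; set d := (q ^ m')%N.
  rewrite mulnDl mul1n {1}(divn_eq (Kf n) d) leq_add2l ltnW //.
  exact: ltn_pmod.
Qed.

Definition Dn (m : nat) : nat := (16 * m + (8 * m) ^ m)%N.
Definition Tn (m : nat) : nat := (Dn m ^ m)%N.

Lemma Nf_nat n m' : (Nf n m' <= Kf n * qf n m' + qf n m' ^ m'.+1)%N.
Proof.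
rewrite /Nf /rf expnSr mulnA mulnDl mul1n mulnDl leq_add2r leq_mul2r.
by rewrite leq_divM orbT.
Qed.

Lemma Nf_bound n m' : (1 <= n)%N ->
  INR (Nf n m') <= INR (Dn m'.+1) * Rpower (INR n) (eps + / INR m'.+1).
Proof.
move=> hn; have hn' : 1 <= INR n by apply: (natRle hn).
have hn0 : 0 < INR n by lra.
have hm : 0 < INR m'.+1 by apply: lt_0_INR; apply/ltP.
set P := Rpower (INR n) (/ INR m'.+1).
set E := Rpower (INR n) eps.
have hP : 1 <= P by apply: Rpower_ge1 => //; apply/Rlt_le/Rinv_0_lt_compat.
have hE : 1 <= E by apply: Rpower_ge1 => //; lra.
have hX : Rpower (INR n) (eps + / INR m'.+1) = E * P by rewrite Rpower_plus.
rewrite hX.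
have [hK1 hK2] := Kf_bounds hn.
have hs := sf_real m' hn.
have hq : INR (qf n m') <= 8 * INR m'.+1 * P.
  have := natRle (qf_le m' hn); rewrite !natRM => h1.
  apply: Rle_trans h1 _; rewrite -/P (_ : INR 4 = 4); last by rewrite /=; lra.
  have : 0 <= INR m'.+1 by lra.
  move=> h2; have := Rmult_le_compat_l _ _ _ h2 hs; rewrite -/P; lra.
have hq0 : 0 <= INR (qf n m') by apply: pos_INR.
apply: Rle_trans (natRle (Nf_nat n m')) _.
rewrite natRD natRM natRX /Dn natRD natRM natRX (_ : INR 16 = 16); last by rewrite /=; lra.
rewrite natRM (_ : INR 8 = 8); last by rewrite /=; lra.
have h1 : INR (Kf n) * INR (qf n m') <= 16 * INR m'.+1 * (E * P).
  apply: Rle_trans (Rmult_le_compat _ _ _ _ (pos_INR _) hq0 hK2 hq) _.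
  rewrite -/E; nra.
have h2 : INR (qf n m') ^ m'.+1 <= (8 * INR m'.+1) ^ m'.+1 * (E * P).
  apply: Rle_trans (pow_incr _ _ m'.+1 (conj hq0 hq)) _.
  rewrite Rpow_mult_distr /P Rpower_invK //.
  have : 0 <= (8 * INR m'.+1) ^ m'.+1 by apply: pow_le; lra.
  have : INR n <= E * Rpower (INR n) (/ INR m'.+1).
    rewrite -/P; have : INR n <= E.
      rewrite /E -{1}(Rpower_1 (INR n)) //; apply: Rle_Rpower => //.
    nra.
  nra.
nra.
Qed.

Lemma Nf_bound2 n m' : (1 <= n)%N -> (Tn m'.+1 <= n)%N ->
  INR (Nf n m') <= Rpower (INR n) (eps + 2 / INR m'.+1).
Proof.
move=> hn hT; apply: Rle_trans (Nf_bound m' hn) _.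
have hn' : 1 <= INR n by apply: (natRle hn).
have hm : 0 < INR m'.+1 by apply: lt_0_INR; apply/ltP.
have hD : INR (Dn m'.+1) <= Rpower (INR n) (/ INR m'.+1).
  have hD0 : 0 < INR (Dn m'.+1).
    apply: lt_0_INR; apply/ltP; rewrite /Dn; lia.
  rewrite -{1}(Rpower_powK hD0 (ltn0Sn m')).
  apply: Rle_Rpower_l; first by apply/Rlt_le/Rinv_0_lt_compat.
  split; first by apply: pow_lt.
  by rewrite -natRX; apply: natRle.
rewrite (_ : eps + 2 / INR m'.+1 = / INR m'.+1 + (eps + / INR m'.+1)); last by field; lra.
rewrite [Rpower _ (_ + (_ + _))]Rpower_plus.
apply: Rmult_le_compat_r => //; apply/Rlt_le/exp_pos.
Qed.

End Asym.

Fixpoint Mf (n : nat) : nat :=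
  match n with
  | 0 => 2
  | n'.+1 => if (Tn (Mf n').+1 <= n'.+1)%N then (Mf n').+1 else Mf n'
  end.

Lemma Mf_ge2 n : (2 <= Mf n)%N.
Proof. elim: n => //= n IH; case: ifP => // _; exact: leqW. Qed.

Lemma Mf_inv n : Mf n = 2%N \/ (Tn (Mf n) <= n)%N.
Proof.
elim: n => [|n IH] /=; first by left.
case: ifP => [h|_]; first by right.
case: IH => [->|h]; [by left|right; exact: leqW].
Qed.

Lemma Mf_S n : (Mf n <= Mf n.+1)%N.
Proof. by rewrite /=; case: ifP. Qed.

Lemma Mf_mono n1 n2 : (n1 <= n2)%N -> (Mf n1 <= Mf n2)%N.
Proof.
move/subnK <-; elim: (n2 - n1)%N => // d IH.
by rewrite addSn; apply: leq_trans IH (Mf_S _).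
Qed.

Lemma Mf_unb m0 : exists n1, forall n, (n1 <= n)%N -> (m0 <= Mf n)%N.
Proof.
elim: m0 => [|m0 [n1 IH]]; first by exists 0%N.
pose n2 := maxn n1 (Tn m0.+1).
exists n2.+1 => n hn; apply: leq_trans (Mf_mono hn).
have h2 := IH n2 (leq_maxl _ _).
rewrite /=; case: ifP => [_|]; first by [].
move=> hF; rewrite ltn_neqAle h2 andbT; apply/negP => /eqP hE; move: hF.
by rewrite -hE (leq_trans (leq_maxr n1 _) (leqnSn n2)).
Qed.

Theorem theorem5 (eps : R) (heps : (1 <= eps)%R) :
  exists (k N : nat -> nat) (n0 : nat) (c1 c2 : R),
    (0 < c1)%R /\ (0 < c2)%R /\
    (forall n : nat, le n0 n ->
       PIR_exists (N n) n (k n) /\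
       (c1 * Rpower (INR n) eps <= INR (k n))%R /\
       (INR (k n) <= c2 * Rpower (INR n) eps)%R) /\
    (forall tau : R, (0 < tau)%R ->
       exists (C : R) (n1 : nat), forall n : nat, le n1 n ->
         (INR (N n) <= C * Rpower (INR n) (eps + tau))%R).
Proof.
exists (Kf eps), (fun n => Nf eps n (Mf n).-1), 1%N, 1, 2.
split; first lra. split; first lra. split.
  move=> n /leP hn; split; first exact: Nf_PIR.
  have := Kf_bounds heps hn; lra.
move=> tau htau.
pose m0 := (Z.to_nat (up (2 / tau))).+3.
have hm0 : 2 / INR m0 <= tau.
  have [a1 _] := archimed (2 / tau).
  have hpos : 0 < 2 / tau by apply: Rdiv_lt_0_compat; lra.
  have hz : (0 <= up (2 / tau))%Z by apply: le_IZR; lra.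
  have hI : INR m0 = IZR (up (2 / tau)) + 3.
    rewrite /m0 !S_INR INR_IZR_INZ Z2Nat.id //; lra.
  have hI0 : 0 < INR m0 by lra.
  apply: (Rmult_le_reg_r (INR m0)) => //.
  rewrite /Rdiv Rmult_assoc Rinv_l; last lra.
  have : 2 / tau * tau = 2 by field; lra.
  nra.
have [n1 Hn1] := Mf_unb m0.
exists 1, (maxn n1 1).
move=> n /leP hn; rewrite Rmult_1_l.
have hn1 : (1 <= n)%N by apply: leq_trans hn; apply: leq_maxr.
have hM : (m0 <= Mf n)%N by apply: Hn1; apply: leq_trans hn; apply: leq_maxl.
have hM2 : (2 <= Mf n)%N := Mf_ge2 n.
have hT : (Tn (Mf n) <= n)%N.
  by case: (Mf_inv n) => // h; rewrite h in hM.
have hMe : (Mf n).-1.+1 = Mf n by rewrite prednK // (leq_trans _ hM2).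
have := Nf_bound2 heps hn1 (m':=(Mf n).-1); rewrite hMe => /(_ hT) H.
apply: Rle_trans H _; apply: Rle_Rpower; first by apply: (natRle hn1).
apply: Rplus_le_compat_l; apply: Rle_trans hm0.
have h0 : 0 < INR m0 by apply: lt_0_INR; apply/ltP.
have hle : INR m0 <= INR (Mf n) by apply: natRle.
apply: Rmult_le_compat_l; first lra.
by apply: Rinv_le_contravar.
Qed.
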